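(* Let $n\ge1$, $r\ge0$ be integers and $\lambda$ a partition with $\ell(\lambda)\le n$ and $\lambda_1\le r$. Then $(x_1\cdots x_n)^r\,\mathrm{spo}_\lambda(x_1,\dots,x_n;z)$ is a polynomial in $x_1,\dots,x_n$ (with coefficients polynomial in $z$), and \[ \left[(x_1\cdots x_n)^r\,\mathrm{spo}_\lambda(x_1,\dots,x_n;z)\right]\Big|_{x_1=0}=\begin{cases}(x_2\cdots x_n)^r\,\mathrm{spo}_{(\lambda_2,\dots,\lambda_n)}(x_2,\dots,x_n;z)&\text{if }\lambda_1=r,\\ 0&\text{otherwise.}\end{cases} \]
   Context: Here $z$ is a single indeterminate playing the role of $Y=(y_1)$ ($m=1$). $\bar x=1/x$. Orthosymplectic Schur function: order $1<\bar1<\cdots<n<\bar n<1'<\cdots<m'$; an orthosymplectic tableau of shape $\lambda$ is a filling such that the entries from $\{1,\bar1,\dots,n,\bar n\}$ form a symplectic tableau (weakly increasing along rows, strictly increasing down columns, entries in row $i$ are $\ge i$) and the remaining primed entries form a skew filling strictly increasing along rows and weakly increasing down columns; weight $\prod_i x_i^{\#i-\#\bar i}\prod_j y_j^{\#j'}$; $\mathrm{spo}_\lambda(X;Y)$ is the sum of weights. $F|_{x_1=0}$ denotes substitution $x_1=0$ in the polynomial $F$. *)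

(* Defs.v *)
From HB Require Import structures.
From mathcomp Require Import all_boot all_order all_algebra fraction.
From mathcomp Require Import mpoly.
Set Implicit Arguments. Unset Strict Implicit. Unset Printing Implicit Defensive.
Import Order.TTheory GRing.Theory Num.Theory.
Local Open Scope ring_scope.

(* Partitions: a weakly decreasing sequence of positive integers.
   length = size, lambda_1 = head 0 lambda, (lambda_2,...) = behead lambda. *)
Definition is_partition (la : seq nat) : bool :=
  sorted geq la && (0%N \notin la).

(* Alphabet for m unprimed indices x_1..x_m and ONE primed letter 1'
   (Y = (y_1) = (z)), encoded as 'I_(2m+1), order-preserving:
     k = 2i     <-> unbarred  i+1
     k = 2i+1   <-> barred    \bar{i+1}
     k = 2m     <-> 1'
   so the order 1 < \bar1 < ... < m < \bar m < 1' is the order on 'I_(2m+1). *)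
Definition letter (m : nat) := 'I_(m.*2).+1.
Definition is_primed m (k : letter m) : bool := (m.*2 <= k)%N.

Definition shapeR (la : seq nat) := size la.
Definition shapeC (la : seq nat) := foldr maxn 0%N la.
Definition in_shape (la : seq nat) (r c : nat) : bool := (c < nth 0%N la r)%N.

Definition filling m la := {ffun 'I_(shapeR la) * 'I_(shapeC la) -> letter m}.

Definition entry m la (T : filling m la) (r c : nat) : option (letter m) :=
  match insub r, insub c with
  | Some r', Some c' => if in_shape la r c then Some (T (r', c')) else None
  | _, _ => None
  end.

(* Orthosymplectic tableau of shape la (one primed letter):
   - cells outside the shape carry the fixed dummy value 0 (so that
     fillings correspond bijectively to fillings of the shape);
   - horizontally adjacent cells a | b:  a <= b, and a = b only if unprimed
     (unprimed weakly increasing, primed strictly increasing along rows);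
   - vertically adjacent cells a over b: a <= b, and a = b only if primed
     (unprimed strictly increasing, primed weakly increasing down columns);
   - an unprimed entry in row r (0-based) is >= unbarred r+1, i.e. k >= 2r.
   Since primed letters are largest, the unprimed entries form a subdiagram
   (a symplectic tableau) and the primed ones the complementary skew shape. *)
Definition is_osp_tableau m la (T : filling m la) : bool :=
  [forall rc : 'I_(shapeR la) * 'I_(shapeC la),
    let r := val rc.1 in let c := val rc.2 in
    if ~~ in_shape la r c then val (T rc) == 0%N
    else
    [&& (is_primed (T rc) || (r.*2 <= T rc)%N),
        (match entry T r c.+1 with
         | Some b => (T rc <= b)%N && ((T rc == b) ==> ~~ is_primed b)
         | None => true end) &
        (match entry T r.+1 c with
         | Some b => (T rc <= b)%N && ((T rc == b) ==> is_primed b)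
         | None => true end)]].

Definition letter_wt (F : fieldType) m (x : 'I_m -> F) (z : F) (k : letter m) : F :=
  match (insub (k./2) : option 'I_m) with
  | Some i => if odd k then (x i)^-1 else x i
  | None => z
  end.

Definition osp_wt (F : fieldType) m la (x : 'I_m -> F) (z : F) (T : filling m la) : F :=
  \prod_(rc : 'I_(shapeR la) * 'I_(shapeC la) | in_shape la rc.1 rc.2)
     letter_wt x z (T rc).

Definition spo (F : fieldType) m (la : seq nat) (x : 'I_m -> F) (z : F) : F :=
  \sum_(T : filling m la | is_osp_tableau T) osp_wt x z T.

(* The field of rational functions in x_1..x_n, z: variables 'X_i (i < n) are
   x_{i+1}, and 'X_n is z. *)
Definition RatF (n : nat) := {fraction {mpoly int[n.+1]}}.
Definition xvar n (i : 'I_n) : RatF n := tofrac ('X_(widen_ord (leqnSn n) i)).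
Definition zvar n : RatF n := tofrac ('X_(ord_max)).

Definition subst_x1_0 n (P : {mpoly int[n.+1]}) : RatF n :=
  mmap (fun c : int => c%:~R) (fun j : 'I_n.+1 => if val j == 0%N then 0 else tofrac 'X_j) P.

(* x_{i+2}, i < n-1: the variables x_2..x_n, read in RatF n *)
Definition xtail n (i : 'I_n.-1) : RatF n := tofrac ('X_(inord i.+1 : 'I_n.+1)).

(* Main.v *)
Require Import Defs.
From HB Require Import structures.
From mathcomp Require Import all_boot all_order all_algebra fraction.
From mathcomp Require Import mpoly.
From mathcomp Require Import zify.
Set Implicit Arguments. Unset Strict Implicit. Unset Printing Implicit Defensive.
Import Order.TTheory GRing.Theory Num.Theory.

Lemma nth_le_shapeC (la : seq nat) r : (nth 0 la r <= shapeC la)%N.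
Proof.
elim: la r => [|a l IH] [|r] //=; rewrite /shapeC /=; first exact: leq_maxl.
apply: leq_trans (IH r) _; exact: leq_maxr.
Qed.

Lemma in_shape_box la r c : in_shape la r c -> (r < size la)%N /\ (c < shapeC la)%N.
Proof.
rewrite /in_shape => h; split; last exact: leq_trans h (nth_le_shapeC la r).
by rewrite ltnNge; apply/negP => /(nth_default 0%N) e; rewrite e in h.
Qed.

Definition GL m la (T : filling m la) (r c : nat) : letter m :=
  match (insub r : option 'I_(shapeR la)), (insub c : option 'I_(shapeC la)) with
  | Some r', Some c' => T (r', c')
  | _, _ => ord0
  end.
Definition G m la (T : filling m la) r c : nat := val (GL T r c).

Lemma GL_ord m la (T : filling m la) (i : 'I_(shapeR la)) (j : 'I_(shapeC la)) :
  GL T i j = T (i, j).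
Proof. by rewrite /GL !valK. Qed.

Lemma G_bound m la (T : filling m la) r c : (G T r c <= m.*2)%N.
Proof. by rewrite /G -ltnS ltn_ord. Qed.

Lemma entryE m la (T : filling m la) r c :
  entry T r c = if in_shape la r c then Some (GL T r c) else None.
Proof.
rewrite /entry /GL.
case: (ltnP r (shapeR la)) => hr; last first.
  rewrite insubF ?ltnNge ?hr //; case: ifP => // /in_shape_box [].
  by rewrite /shapeR ltnNge hr.
rewrite (@insubT _ (fun k => (k < shapeR la)%N) 'I_(shapeR la) r hr).
case: (ltnP c (shapeC la)) => hc; last first.
  rewrite insubF ?ltnNge ?hc //; case: ifP => // /in_shape_box [] _.
  by rewrite ltnNge hc.
by rewrite (@insubT _ (fun k => (k < shapeC la)%N) 'I_(shapeC la) c hc).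
Qed.

Definition mkF m la (f : nat -> nat -> nat) : filling m la :=
  [ffun rc => inord (f (val rc.1) (val rc.2))].

Lemma G_mkF m la f r c : (r < size la)%N -> (c < shapeC la)%N -> (f r c <= m.*2)%N ->
  G (mkF m la f) r c = f r c.
Proof.
move=> hr hc hf; rewrite /G /GL (@insubT _ (fun k => (k < shapeR la)%N) 'I_(shapeR la) r hr) (@insubT _ (fun k => (k < shapeC la)%N) 'I_(shapeC la) c hc) ffunE /=.
by rewrite inordK.
Qed.

Definition ospN m la (g : nat -> nat -> nat) : Prop :=
 (forall r c, in_shape la r c ->
   [/\ (m.*2 <= g r c)%N || (r.*2 <= g r c)%N,
       in_shape la r c.+1 -> (g r c <= g r c.+1)%N && ((g r c == g r c.+1) ==> ~~ (m.*2 <= g r c.+1)%N) &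
       in_shape la r.+1 c -> (g r c <= g r.+1 c)%N && ((g r c == g r.+1 c) ==> (m.*2 <= g r.+1 c)%N)])
 /\ (forall r c, (r < size la)%N -> (c < shapeC la)%N -> ~~ in_shape la r c -> g r c = 0%N).

Lemma ospP m la (T : filling m la) : is_osp_tableau T <-> ospN m la (G T).
Proof.
split.
- move/forallP => H; split.
  + move=> r c ins; have [hr hc] := in_shape_box ins.
    have := H (Ordinal hr, Ordinal hc); rewrite /= ins /= !entryE -(GL_ord T (Ordinal hr) (Ordinal hc)) /=.
    case/and3P => h1 h2 h3; split => // ins'; [move: h2 | move: h3]; rewrite ins' //.
  + move=> r c hr hc nins; have := H (Ordinal hr, Ordinal hc).
    by rewrite /= nins -(GL_ord T (Ordinal hr) (Ordinal hc)) /= => /eqP.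
- case=> H1 H2; apply/forallP => [[i j]] /=.
  case: (boolP (in_shape la i j)) => ins /=.
  + have [h1 h2 h3] := H1 _ _ ins; rewrite !entryE -GL_ord h1 /=.
    apply/andP; split.
    * by case: (boolP (in_shape la i j.+1)) => i2 //; apply: h2.
    * by case: (boolP (in_shape la i.+1 j)) => i2 //; apply: h3.
  + by rewrite -GL_ord; apply/eqP; apply: H2.
Qed.

Lemma part_nth la r1 r2 : is_partition la -> (r1 <= r2)%N -> (nth 0 la r2 <= nth 0 la r1)%N.
Proof.
case/andP => s _ h; case: (ltnP r2 (size la)) => h2; last by rewrite nth_default.
have gtr : transitive geq by move=> a b c h1 h3; exact: leq_trans h3 h1.
have grf : reflexive geq by move=> a; exact: leqnn.
apply: (sorted_leq_nth gtr grf 0%N s) => //; rewrite inE; lia.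
Qed.

Lemma in_shape_up la r1 r2 c : is_partition la -> (r1 <= r2)%N ->
  in_shape la r2 c -> in_shape la r1 c.
Proof. move=> p h; rewrite /in_shape => h2; exact: leq_trans h2 (part_nth p h). Qed.

Lemma nth_le_head la r : is_partition la -> (nth 0 la r <= head 0%N la)%N.
Proof. by move=> p; rewrite -nth0; apply: part_nth. Qed.

Lemma box_big (R : Type) (idx : R) (op : Monoid.com_law idx) la (F : nat -> nat -> R) :
  \big[op/idx]_(rc : 'I_(shapeR la) * 'I_(shapeC la) | in_shape la rc.1 rc.2) F rc.1 rc.2
  = \big[op/idx]_(r < size la) \big[op/idx]_(c < nth 0 la r) F r c.
Proof.
have := (@pair_big_dep _ _ op _ _ xpredT (fun (i : 'I_(shapeR la)) (j : 'I_(shapeC la)) => in_shape la i j) (fun i j => F (val i) (val j))).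
move=> /= <-.
apply: eq_bigr => i _; by rewrite (big_ord_widen _ _ (nth_le_shapeC la i)).
Qed.

Definition cnt m la (T : filling m la) (k : nat) : nat :=
  \sum_(r < size la) \sum_(c < nth 0 la r) nat_of_bool (G T r c == k).

Lemma G_row m la (T : filling m la) r c : (0 < m)%N -> ospN m la (G T) ->
  in_shape la r c -> (0 < r)%N -> (2 <= G T r c)%N.
Proof. move=> m0 [H _] ins r0; have [h1 _ _] := H _ _ ins; move: h1; lia. Qed.

Lemma col_weak m la (T : filling m la) r1 c d : is_partition la -> ospN m la (G T) ->
  in_shape la (r1 + d) c -> (G T r1 c <= G T (r1 + d) c)%N.
Proof.
move=> p [H _]; elim: d => [|d IH] ins; first by rewrite addn0.
have ins' : in_shape la (r1 + d) c by apply: in_shape_up ins; lia.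
rewrite addnS in ins *; have [_ _ h3] := H _ _ ins'; move: h3 => /(_ ins) /andP [h _].
exact: leq_trans (IH ins') h.
Qed.

Lemma col_strict m la (T : filling m la) r1 r2 c : is_partition la -> ospN m la (G T) ->
  in_shape la r2 c -> (r1 < r2)%N -> (G T r1 c < m.*2)%N -> (G T r1 c < G T r2 c)%N.
Proof.
move=> p o ins lt hv; have [H _] := o.
have e : r2 = (r1 + (r2 - r1).-1).+1 by lia.
have ins' : in_shape la (r1 + (r2 - r1).-1) c by apply: in_shape_up ins; lia.
have w := col_weak (d := (r2 - r1).-1) p o ins'.
have [_ _ h3] := H _ _ ins'; move: h3; rewrite -e => /(_ ins) /andP [h4 /implyP h5].
case: (ltngtP (G T r1 c) (G T r2 c)) => // eq1; first lia.
have : G T (r1 + (r2 - r1).-1) c == G T r2 c by apply/eqP; lia.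
move/h5; lia.
Qed.

Lemma sum_le1 s (f : 'I_s -> bool) : (forall i j, f i -> f j -> i = j) ->
  (\sum_(i < s) nat_of_bool (f i) <= 1)%N.
Proof.
move=> U; case: (pickP f) => [i0 fi0|none].
  rewrite (bigD1 i0) //= fi0 big1 // => i ne; case: (boolP (f i)) => // fi'.
  by rewrite (U _ _ fi' fi0) eqxx in ne.
by rewrite big1 // => i _; rewrite none.
Qed.

Lemma cnt_bound m la (T : filling m la) v : is_partition la -> ospN m la (G T) ->
  (v < m.*2)%N -> (cnt T v <= head 0%N la)%N.
Proof.
move=> p o hv; rewrite /cnt.
rewrite (eq_bigr (fun r : 'I_(size la) => \sum_(c < head 0%N la)
    nat_of_bool ((c < nth 0 la r)%N && (G T r c == v)))); last first.
  move=> r _; rewrite (big_ord_widen (head 0%N la) (fun c => nat_of_bool (G T r c == v)) (nth_le_head r p)) big_mkcond /=.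
  by apply: eq_bigr => c _; case: ifP.
rewrite exchange_big /= -[X in (_ <= X)%N]card_ord -sum1_card leq_sum // => c _.
apply: sum_le1 => i j /andP [hi /eqP ei] /andP [hj /eqP ej]; apply: val_inj => /=.
case: (ltngtP i j) => // h.
- have := col_strict p o hj h; rewrite ei ej; lia.
- have := col_strict p o hi h; rewrite ei ej; lia.
Qed.

From mathcomp Require Import ring.
Local Open Scope ring_scope.

Lemma letter_wt_exp (F : fieldType) m (x : 'I_m -> F) z (k : letter m) :
  letter_wt x z k = (\prod_(i < m) (x i ^+ ((k : nat) == i.*2) * (x i)^-1 ^+ ((k : nat) == i.*2.+1)))
                    * z ^+ ((k : nat) == m.*2).
Proof.
have kb : ((k : nat) <= m.*2)%N by rewrite -ltnS ltn_ord.
rewrite /letter_wt; move: (odd_double_half k); set q := k./2; set b := odd k => ek.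
case: (ltnP q m) => h.
- rewrite (@insubT _ (fun j => (j < m)%N) 'I_m _ h) (bigD1 (Ordinal h)) //= big1 => [|j ne].
  + have -> : ((k : nat) == m.*2) = false by apply/negbTE; move: ek; case: b => /=; lia.
    rewrite mulr1.
    move: ek; case: b => /= ek.
    * have -> : ((k : nat) == q.*2) = false by apply/negbTE; lia.
      have -> : ((k : nat) == q.*2.+1) by apply/eqP; lia.
      by rewrite mulr1 /= expr0 mul1r expr1.
    * have -> : ((k : nat) == q.*2) by apply/eqP; lia.
      have -> : ((k : nat) == q.*2.+1) = false by apply/negbTE; lia.
      by rewrite mulr1 /= expr0 mulr1 expr1.
  + have nej : val j != q by apply: contra ne => /eqP e; apply/eqP/val_inj.
    have -> : ((k : nat) == (val j).*2) = false by apply/negbTE; move: ek nej; case: b => /=; lia.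
    have -> : ((k : nat) == (val j).*2.+1) = false by apply/negbTE; move: ek nej; case: b => /=; lia.
    by rewrite /= !expr0 mulr1.
- rewrite insubF; last by rewrite ltnNge h.
  have -> : ((k : nat) == m.*2) by apply/eqP; move: ek; case: b => /=; lia.
  rewrite expr1 big1 ?mul1r // => j _.
  have -> : ((k : nat) == (val j).*2) = false by apply/negbTE; move: ek (ltn_ord j); case: b => /=; lia.
  have -> : ((k : nat) == (val j).*2.+1) = false by apply/negbTE; move: ek (ltn_ord j); case: b => /=; lia.
  by rewrite /= !expr0 mulr1.
Qed.

Lemma prod_cells_exp (F : fieldType) la (y : F) (e : nat -> nat -> nat) :
  \prod_(r < size la) \prod_(c < nth 0 la r) y ^+ e r c
  = y ^+ (\sum_(r < size la) \sum_(c < nth 0 la r) e r c).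
Proof. by rewrite -prodrXr; apply: eq_bigr => r _; rewrite prodrXr. Qed.

Lemma osp_wt_exp (F : fieldType) m la (x : 'I_m -> F) z (T : filling m la) :
  osp_wt x z T = (\prod_(i < m) (x i ^+ cnt T i.*2 * (x i)^-1 ^+ cnt T i.*2.+1))
                 * z ^+ cnt T m.*2.
Proof.
rewrite /osp_wt (eq_bigr (fun rc : 'I_(shapeR la) * 'I_(shapeC la) => letter_wt x z (GL T rc.1 rc.2))); last first.
  by move=> [i j] _; rewrite GL_ord.
rewrite (box_big _ la (fun r c => letter_wt x z (GL T r c))).
under eq_bigr => r _ do under eq_bigr => c _ do rewrite letter_wt_exp.
under eq_bigr => r _ do rewrite big_split /=.
rewrite big_split /=; congr (_ * _); last by rewrite (prod_cells_exp la z (fun r c => nat_of_bool ((GL T r c : nat) == m.*2))).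
under eq_bigr => r _ do rewrite exchange_big /=.
rewrite exchange_big /=; apply: eq_bigr => i _.
under eq_bigr => r _ do rewrite big_split /=.
by rewrite big_split /= (prod_cells_exp la (x i) (fun r c => nat_of_bool ((GL T r c : nat) == i.*2))) (prod_cells_exp la (x i)^-1 (fun r c => nat_of_bool ((GL T r c : nat) == i.*2.+1))).
Qed.

Lemma wt_poly (F : fieldType) m la (x : 'I_m -> F) z (T : filling m la) r :
  (forall i, x i != 0) -> is_partition la -> (head 0%N la <= r)%N -> ospN m la (G T) ->
  (\prod_(i < m) x i) ^+ r * osp_wt x z T
  = (\prod_(i < m) x i ^+ (r + cnt T i.*2 - cnt T i.*2.+1)) * z ^+ cnt T m.*2.
Proof.
move=> x0 p hr o; rewrite osp_wt_exp mulrA -prodrXl -big_split /=; congr (_ * _).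
apply: eq_bigr => i _.
have hb : (cnt T i.*2.+1 <= r)%N.
  apply: leq_trans hr; apply: cnt_bound p o _; have := ltn_ord i; lia.
have -> : (r + cnt T i.*2 - cnt T i.*2.+1 = (r - cnt T i.*2.+1) + cnt T i.*2)%N by lia.
rewrite exprD -{1}(subnK hb) exprD exprVn.
have y0 : x i ^+ cnt T i.*2.+1 != 0 by rewrite expf_neq0.
by field.
Qed.

Local Close Scope ring_scope.

Lemma ospR m la (T : filling m la) : reflect (ospN m la (G T)) (is_osp_tableau T).
Proof. by apply: (iffP idP) => h; apply/ospP. Qed.

Lemma fill_eq m la (T1 T2 : filling m la) :
  (forall r c, (r < size la)%N -> (c < shapeC la)%N -> G T1 r c = G T2 r c) -> T1 = T2.
Proof.
move=> H; apply/ffunP => [[i j]]; apply: val_inj; rewrite -!GL_ord; exact: H.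
Qed.

Lemma cnt_split m la (T : filling m la) k :
  cnt T k = (\sum_(c < head 0%N la) nat_of_bool (G T 0 c == k)
            + \sum_(r < size (behead la)) \sum_(c < nth 0 (behead la) r) nat_of_bool (G T r.+1 c == k))%N.
Proof.
rewrite /cnt; case: la T => [|a l] T /=; first by rewrite !big_ord0.
by rewrite big_ord_recl.
Qed.

Lemma sum_all a (P : nat -> bool) :
  (\sum_(c < a) nat_of_bool (P c) = a)%N -> forall c, (c < a)%N -> P c.
Proof.
move=> H c hc; apply/negPn/negP => nP.
have : (\sum_(j < a) nat_of_bool (P j) < a)%N; last by rewrite H ltnn.
rewrite (bigD1 (Ordinal hc)) //= (negbTE nP) add0n.
apply: (@leq_ltn_trans (\sum_(j < a | j != Ordinal hc) 1)); first by apply: leq_sum => j _; case: (P j).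
rewrite sum1_card cardC1 card_ord; lia.
Qed.

Lemma sum_le a (P : nat -> bool) : (\sum_(c < a) nat_of_bool (P c) <= a)%N.
Proof.
rewrite -[X in (_ <= X)%N]card_ord -sum1_card; apply: leq_sum => j _; by case: (P j).
Qed.

Lemma row0_small m la (T : filling m la) k : (0 < m)%N -> is_partition la -> ospN m la (G T) ->
  (k < 2)%N -> cnt T k = \sum_(c < head 0%N la) nat_of_bool (G T 0 c == k).
Proof.
move=> m0 p o hk; rewrite cnt_split [X in (_ + X)%N]big1 ?addn0 // => r _; rewrite big1 // => c _.
have ins : in_shape la r.+1 c by rewrite /in_shape -nth_behead.
by have := G_row m0 o ins (ltn0Sn r); case: eqP => // ->; lia.
Qed.

Lemma good_of_e0 m la (T : filling m la) r : (0 < m)%N -> is_partition la -> ospN m la (G T) ->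
  (head 0%N la <= r)%N -> (r + cnt T 0 - cnt T 1 == 0)%N ->
  (head 0%N la == r) && [forall c : 'I_(head 0%N la), G T 0 c == 1%N].
Proof.
move=> m0 p o hr e0.
have h1 := row0_small (k := 1%N) m0 p o (ltnSn 1).
have hs := sum_le (head 0%N la) (fun c => G T 0 c == 1%N). rewrite /= in hs.
rewrite h1 in e0; move: e0 hs; set S := \sum_(c < _) _ => e0 hs.
have eh : head 0%N la = r by lia.
apply/andP; split; first by rewrite eh.
apply/forallP => c.
have := @sum_all (head 0%N la) (fun c => G T 0 c == 1%N); apply; last exact: ltn_ord.
rewrite -/S; lia.
Qed.

Definition ext n' la (T' : filling n' (behead la)) : filling n'.+1 la :=
  mkF n'.+1 la (fun r c => if in_shape la r c then
                             (if r is r'.+1 then G T' r' c + 2 else 1) else 0).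
Definition rst n' la (T : filling n'.+1 la) : filling n' (behead la) :=
  mkF n' (behead la) (fun r c => if in_shape (behead la) r c then G T r.+1 c - 2 else 0).

Lemma in_shapeS la r c : in_shape la r.+1 c = in_shape (behead la) r c.
Proof. by rewrite /in_shape nth_behead. Qed.

Lemma G_ext n' la (T' : filling n' (behead la)) r c : in_shape la r c ->
  G (ext T') r c = if r is r'.+1 then G T' r' c + 2 else 1.
Proof.
move=> ins; have [hr hc] := in_shape_box ins.
rewrite /ext G_mkF // ins //; case: r {hr ins} => [|r] //.
have := G_bound T' r c; lia.
Qed.

Lemma G_ext_out n' la (T' : filling n' (behead la)) r c : (r < size la) -> (c < shapeC la) ->
  ~~ in_shape la r c -> G (ext T') r c = 0.
Proof. by move=> hr hc nins; rewrite /ext G_mkF // (negbTE nins). Qed.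

Lemma G_rst n' la (T : filling n'.+1 la) r c : in_shape (behead la) r c ->
  G (rst T) r c = G T r.+1 c - 2.
Proof.
move=> ins; have [hr hc] := in_shape_box ins.
rewrite /rst G_mkF // ins //; have := G_bound T r.+1 c; lia.
Qed.

Lemma G_rst_out n' la (T : filling n'.+1 la) r c : (r < size (behead la)) -> (c < shapeC (behead la)) ->
  ~~ in_shape (behead la) r c -> G (rst T) r c = 0.
Proof. by move=> hr hc nins; rewrite /rst G_mkF // (negbTE nins). Qed.

Lemma ext_osp n' la (T' : filling n' (behead la)) : ospN n' (behead la) (G T') ->
  ospN n'.+1 la (G (ext T')).
Proof.
case=> H1 H2; split; last exact: G_ext_out.
move=> r c ins; rewrite (G_ext _ ins); case: r ins => [|r] ins.
- split; first by [].
  + by move=> i2; rewrite (G_ext _ i2).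
  + move=> i2; rewrite (G_ext _ i2); lia.
- rewrite in_shapeS in ins; have [h1 h2 h3] := H1 _ _ ins; split.
  + move: h1; lia.
  + by move=> i2; rewrite (G_ext _ i2); rewrite in_shapeS in i2; move: (h2 i2); lia.
  + by move=> i2; rewrite (G_ext _ i2); rewrite in_shapeS in i2; move: (h3 i2); lia.
Qed.

Lemma rst_osp n' la (T : filling n'.+1 la) : ospN n'.+1 la (G T) ->
  ospN n' (behead la) (G (rst T)).
Proof.
move=> o; have [H1 H2] := o; split; last exact: G_rst_out.
have g2 : forall r c, in_shape la r.+1 c -> 2 <= G T r.+1 c.
  by move=> r c i; apply: (G_row (m := n'.+1)) => //.
move=> r c ins; rewrite (G_rst _ ins); have ins' := ins; rewrite -in_shapeS in ins'.
have [h1 h2 h3] := H1 _ _ ins'; have gg := g2 _ _ ins'; split.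
- move: h1; lia.
- move=> i2; rewrite (G_rst _ i2); rewrite -in_shapeS in i2.
  have := g2 _ _ i2; move: (h2 i2); lia.
- move=> i2; rewrite (G_rst _ i2); rewrite -in_shapeS in i2.
  have := g2 _ _ i2; move: (h3 i2); lia.
Qed.

Lemma rst_ext n' la (T' : filling n' (behead la)) : ospN n' (behead la) (G T') ->
  rst (ext T') = T'.
Proof.
case=> _ H2; apply: fill_eq => r c hr hc.
case: (boolP (in_shape (behead la) r c)) => ins.
- rewrite G_rst // G_ext ?in_shapeS //; lia.
- by rewrite G_rst_out // H2.
Qed.

Lemma ext_rst n' la (T : filling n'.+1 la) : is_partition la -> ospN n'.+1 la (G T) ->
  (forall c, c < head 0%N la -> G T 0 c = 1) -> ext (rst T) = T.
Proof.
move=> p o row0; have [_ H2] := o; apply: fill_eq => r c hr hc.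
case: (boolP (in_shape la r c)) => ins.
- rewrite G_ext //; case: r hr ins => [|r] hr ins; first by rewrite row0.
  have gg : 2 <= G T r.+1 c by apply: (G_row (m := n'.+1)).
  rewrite G_rst -?in_shapeS //; lia.
- by rewrite G_ext_out // H2.
Qed.

Lemma cnt_ext n' la (T' : filling n' (behead la)) k : cnt (ext T') k.+2 = cnt T' k.
Proof.
rewrite cnt_split big1 => [|c _]; last first.
  by rewrite G_ext // /in_shape nth0.
rewrite add0n /cnt; apply: eq_bigr => r _; apply: eq_bigr => c _.
rewrite G_ext ?in_shapeS ?/in_shape //; first by rewrite addn2 eqSS.
Qed.

Lemma cnt_ext01 n' la (T' : filling n' (behead la)) :
  cnt (ext T') 0 = 0 /\ cnt (ext T') 1 = head 0%N la.
Proof.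
have hrow k : k < 2 -> \sum_(r < size (behead la)) \sum_(c < nth 0 (behead la) r)
     nat_of_bool (G (ext T') r.+1 c == k) = 0.
  move=> hk; rewrite big1 // => r _; rewrite big1 // => c _.
  rewrite G_ext ?in_shapeS ?/in_shape //; case: eqP => //; lia.
rewrite !cnt_split !hrow // !addn0; split.
- by rewrite big1 // => c _; rewrite G_ext // /in_shape nth0.
- rewrite (eq_bigr (fun _ => 1)) ?sum1_card ?card_ord // => c _.
  by rewrite G_ext // /in_shape nth0.
Qed.

Local Open Scope ring_scope.

Definition eT m r la (T : filling m la) : 'X_{1..m.+1} :=
  [multinom (if ((i : nat) < m)%N then (r + cnt T (i : nat).*2 - cnt T (i : nat).*2.+1)%N
             else cnt T m.*2) | i < m.+1].
Definition Pol m r la : {mpoly int[m.+1]} :=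
  \sum_(T : filling m la | is_osp_tableau T) 'X_[eT r T].

Lemma tofrac_X n (e : 'X_{1..n.+1}) :
  tofrac ('X_[e] : {mpoly int[n.+1]}) =
  (\prod_(i < n) xvar i ^+ e (widen_ord (leqnSn n) i)) * zvar n ^+ e ord_max.
Proof.
rewrite mpolyXE_id rmorph_prod big_ord_recr /=; congr (_ * _); last by rewrite rmorphXn.
by apply: eq_bigr => i _; rewrite rmorphXn.
Qed.

Lemma X_neq0 n (i : 'I_n.+1) : tofrac ('X_i : {mpoly int[n.+1]}) != 0.
Proof. by rewrite tofrac_eq0; apply/negP; rewrite -msupp_eq0 msuppX. Qed.

Lemma tofrac_Pol n r la : is_partition la -> (head 0%N la <= r)%N ->
  tofrac (Pol n r la) = (\prod_(i < n) xvar i) ^+ r * spo la (@xvar n) (zvar n).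
Proof.
move=> p hr; rewrite /Pol /spo rmorph_sum mulr_sumr; apply: eq_bigr => T oT.
rewrite wt_poly //; last 2 first.
- by move=> i; apply: X_neq0.
- by apply/ospP.
apply: (etrans (tofrac_X (eT r T))); congr (_ * _); last by rewrite mnmE /= ltnn.
by apply: eq_bigr => i _; rewrite mnmE /= ltn_ord.
Qed.

Lemma subst_X n (e : 'X_{1..n.+1}) :
  subst_x1_0 ('X_[e] : {mpoly int[n.+1]}) =
  (e ord0 == 0%N)%:R * \prod_(i < n) tofrac ('X_(lift ord0 i) : {mpoly int[n.+1]}) ^+ e (lift ord0 i).
Proof.
rewrite /subst_x1_0 /mmap msuppX big_seq1 mcoeffX eqxx /mmap1 big_ord_recl /= expr0n.
by rewrite mulr1z mul1r.
Qed.

Lemma natb_mul (R : ringType) (b : bool) (y : R) : b%:R * y = if b then y else 0.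
Proof. by case: b; rewrite ?mul1r ?mul0r. Qed.

Lemma eT0 m r la (T : filling m.+1 la) : eT r T ord0 = (r + cnt T 0 - cnt T 1)%N.
Proof. by rewrite mnmE. Qed.

Lemma behead_part la : is_partition la -> is_partition (behead la).
Proof.
case: la => [|a l] //= /andP [s n0]; apply/andP; split.
- exact: (path_sorted s).
- by move: n0; rewrite inE negb_or => /andP [].
Qed.

Unset Implicit Arguments.
Theorem lemma4p3 (n r : nat) (la : seq nat) :
  (1 <= n)%N -> is_partition la -> (size la <= n)%N -> (head 0%N la <= r)%N ->
  exists P : {mpoly int[n.+1]},
    tofrac P = (\prod_(i < n) xvar i) ^+ r * spo la (@xvar n) (zvar n) /\
    subst_x1_0 P =
      (if head 0%N la == r
       then (\prod_(i < n.-1) xtail i) ^+ r * spo (behead la) (@xtail n) (zvar n)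
       else 0).
Proof.
case: n => [//|n'] _ p _ hr; exists (Pol n'.+1 r la); split; first exact: tofrac_Pol.
rewrite (_ : subst_x1_0 (Pol n'.+1 r la) =
   \sum_(T : filling n'.+1 la | is_osp_tableau T) subst_x1_0 'X_[eT r T]); last first.
  by rewrite /subst_x1_0 /Pol raddf_sum.
under eq_bigr => T _ do rewrite subst_X natb_mul eT0.
rewrite -big_mkcondr /=.
case: (eqVneq (head 0%N la) r) => [eh|neh]; last first.
  rewrite big1 // => T /andP [oT e0]; exfalso.
  have := good_of_e0 (ltn0Sn n') p ((ospP T).1 oT) hr e0.
  by rewrite (negbTE neh).
rewrite /spo mulr_sumr.
have pb := behead_part p.
have hrb : (head 0%N (behead la) <= r)%N.
  rewrite -eh -!nth0 nth_behead; exact: part_nth p (leq0n 1).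
rewrite (reindex_onto (@ext n' la) (@rst n' la)) => [|T /andP [oT e0]]; last first.
  have oN := (ospP T).1 oT.
  have := good_of_e0 (ltn0Sn n') p oN hr e0; case/andP => _ /forallP row0.
  apply: ext_rst => // c hc; exact: (eqP (row0 (Ordinal hc))).
apply: eq_big => [T'|T' oT'].
- apply/idP/idP.
  + case/andP => [/andP [oE _] /eqP eR]; rewrite -eR; apply/ospP.
    by apply: rst_osp; apply/ospP.
  + move=> oT'; have oN := (ospP T').1 oT'.
    rewrite rst_ext // eqxx andbT; apply/andP; split; first by apply/ospP; exact: ext_osp.
    have [-> ->] := cnt_ext01 T'; rewrite eh; lia.
- rewrite (@wt_poly _ n' (behead la) (@xtail n'.+1) (zvar n'.+1) T' r) //; last 2 first.
  + by move=> i; apply: X_neq0.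
  + move/andP: oT' => [/andP [oE _] /eqP eR]; rewrite -eR; apply: rst_osp; exact/ospP.
  rewrite big_ord_recr /=; congr (_ * _).
  + apply: eq_bigr => i _; rewrite mnmE /= ltnS ltn_ord. rewrite /bump add1n doubleS !cnt_ext.
    congr (_ ^+ _); rewrite /xtail; congr (tofrac 'X__); apply: val_inj; rewrite /= inordK // /bump.
    by rewrite ltnS; apply: leq_trans (ltn_ord i) _.
  + rewrite mnmE /= /bump add1n ltnn doubleS cnt_ext; congr (tofrac 'X__ ^+ _); exact: val_inj.
Qed.
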